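(* Let $\mathcal{D}$ be a set of Borel probability distributions on $\mathbb{R}^n$, $(\Theta,\rho)$ a metric space, $\theta:\mathcal D\to\Theta$, $\tau>0$, $\varepsilon>0$, $\alpha\in[0,1)$. Any randomized SQ algorithm estimating $\theta(D)$ over $\mathcal{D}$ with precision $\varepsilon$ and probability of success at least $1-\alpha$ must make at least $$q\ge\frac{\log\big((1-\alpha)\,\mathrm{pk}_{(\theta(\mathcal D),\rho)}(\varepsilon)\big)}{\log(1+\lfloor1/\tau\rfloor)}$$ queries to $\mathrm{STAT}(\tau)$, where $\theta(\mathcal D)=\{\theta(D):D\in\mathcal D\}$.
   Context: For $\mathcal{M}\subseteq\Theta$, an $\varepsilon$-packing of $\mathcal M$ is a subset $\{\theta_1,\dots,\theta_k\}\subseteq\mathcal M$ with $\rho(\theta_i,\theta_j)>2\varepsilon$ for all $i\neq j$; $\mathrm{pk}_{(\mathcal M,\rho)}(\varepsilon)$ is the largest cardinality of such a packing (possibly infinite). SQ framework: a $\mathrm{STAT}(\tau)$ oracle for $D$ answers each measurable query $r:\mathbb{R}^n\to[-1,1]$ with an arbitrary adversarial real $a$ (possibly depending on previous queries) with $|a-\mathbb{E}_D[r]|\le\tau$. A deterministic SQ algorithm making $q$ queries chooses each query as a function of previous answers and outputs an element of $\Theta$ that is a function of all $q$ answers. A randomized SQ algorithm is a probability distribution over deterministic SQ algorithms making $q$ queries; it estimates $\theta$ over $\mathcal{D}$ with precision $\varepsilon$ and probability of success $1-\alpha$ if for every $D\in\mathcal D$ and every valid $\mathrm{STAT}(\tau)$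 oracle for $D$, with probability at least $1-\alpha$ its output $\hat\theta$ satisfies $\rho(\theta(D),\hat\theta)\le\varepsilon$. *)

(* Defs.v *)
From HB Require Import structures.
From mathcomp Require Import all_boot all_order all_algebra.
From mathcomp Require Import all_classical all_reals all_analysis.
Set Implicit Arguments. Unset Strict Implicit. Unset Printing Implicit Defensive.
Import Order.TTheory GRing.Theory Num.Theory.
Local Open Scope classical_set_scope.
Local Open Scope ring_scope.

(* R^n, with the product sigma-algebra of the Borel sets of R (= Borel sets of R^n). *)
Definition Rn (R : realType) (n : nat) := n.-tuple R.

Record sq_query (R : realType) (n : nat) := SQQuery {
  sq_fun :> n.-tuple R -> R ;
  sq_meas : measurable_fun [set: n.-tuple R] sq_fun ;
  sq_bdd : forall x, -1 <= sq_fun x <= 1 }.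

(* E_D[r] (an extended real; finite since r is bounded and measurable). *)
Definition sq_expect (R : realType) (n : nat) (D : probability (n.-tuple R) R)
    (r : sq_query R n) : \bar R :=
  (\int[D]_x (sq_fun r x)%:E)%E.

(* An oracle answers the current query r as a function of the previously asked
   queries (adversarial, may depend on them) and r itself. *)
Definition sq_oracle (R : realType) (n : nat) :=
  seq (sq_query R n) -> sq_query R n -> R.

Definition valid_STAT (R : realType) (n : nat) (tau : R)
    (D : probability (n.-tuple R) R) (O : sq_oracle R n) : Prop :=
  forall (hist : seq (sq_query R n)) (r : sq_query R n),
    (`| (O hist r)%:E - sq_expect D r | <= tau%:E)%E.

Record det_sq_alg (R : realType) (n : nat) (Theta : Type) := DetSQAlg {
  alg_query : seq R -> sq_query R n ;
  alg_output : seq R -> Theta }.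

Fixpoint sq_transcript (R : realType) (n : nat) (Theta : Type)
    (A : det_sq_alg R n Theta) (O : sq_oracle R n) (k : nat)
    : seq (sq_query R n) * seq R :=
  match k with
  | 0 => ([::], [::])
  | k'.+1 =>
      let: (qs, ans) := sq_transcript A O k' in
      let r := alg_query A ans in
      (rcons qs r, rcons ans (O qs r))
  end.

Definition sq_run (R : realType) (n : nat) (Theta : Type)
    (A : det_sq_alg R n Theta) (O : sq_oracle R n) (q : nat) : Theta :=
  alg_output A (sq_transcript A O q).2.

(* A randomized SQ algorithm making q queries is a probability distribution over
   deterministic SQ algorithms, given as a random element
   A : Omega -> det_sq_alg on a probability space (Omega, P).
   It estimates theta over DD with precision eps and success probability
   1 - alpha if for every D in DD and every valid STAT(tau) oracle O, the
   success event has (inner) probability at least 1 - alpha. *)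
Definition rand_sq_estimates (R : realType) (n : nat) (Theta : Type)
    (rho : Theta -> Theta -> R)
    (DD : set (probability (n.-tuple R) R))
    (theta : probability (n.-tuple R) R -> Theta)
    (tau eps alpha : R) (q : nat)
    (dO : measure_display) (Omega : measurableType dO) (P : probability Omega R)
    (A : Omega -> det_sq_alg R n Theta) : Prop :=
  forall D, DD D -> forall O : sq_oracle R n, valid_STAT tau D O ->
    exists S : set Omega, [/\ measurable S,
      S `<=` [set w | rho (theta D) (sq_run (A w) O q) <= eps] &
      (P S >= (1 - alpha)%:E)%E].

Definition is_metric (R : realType) (Theta : Type) (rho : Theta -> Theta -> R) :=
  [/\ forall x y, 0 <= rho x y,
      forall x y, rho x y = 0 <-> x = y,
      forall x y, rho x y = rho y x &
      forall x y z, rho x z <= rho x y + rho y z].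

Definition is_packing (R : realType) (Theta : Type) (rho : Theta -> Theta -> R)
    (M : set Theta) (eps : R) (k : nat) (f : 'I_k -> Theta) : Prop :=
  (forall i, M (f i)) /\
  (forall i j : 'I_k, i != j -> 2 * eps < rho (f i) (f j)).

(* pk_(M,rho)(eps): the largest cardinality of an eps-packing of M, as an
   extended real (+oo if packings of every finite size exist). *)
Definition pk (R : realType) (Theta : Type) (rho : Theta -> Theta -> R)
    (M : set Theta) (eps : R) : \bar R :=
  ereal_sup [set (k%:R)%:E | k in [set k : nat | exists f : 'I_k -> Theta, is_packing rho M eps f]].

(* Main.v *)
Require Import Defs.
From HB Require Import structures.
From mathcomp Require Import all_boot all_order all_algebra.
From mathcomp Require Import all_classical all_reals all_analysis.
From mathcomp Require Import lra measurable_realfun.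
Import Order.TTheory GRing.Theory Num.Theory.
Set Implicit Arguments. Unset Strict Implicit.
Local Open Scope classical_set_scope.
Local Open Scope ring_scope.

Lemma expect_bnd (R : realType) n (D : probability (n.-tuple R) R) (r : sq_query R n) :
  (`|sq_expect D r| <= 1%:E)%E.
Proof.
have mr : measurable_fun [set: n.-tuple R] (EFin \o r).
  by apply/measurable_EFinP; exact: sq_meas.
rewrite /sq_expect; apply: (le_trans (le_abse_integral _ _ mr)) => //.
apply: (@le_trans _ _ (\int[D]_(x in [set: n.-tuple R]) (cst 1%E x))%E).
  apply: ge0_le_integral => //.
  - by apply: measurableT_comp => //.
  - move=> x _ /=; rewrite lee_fin; have /andP[h1 h2] := sq_bdd r x.
    by rewrite ler_norml h1 h2.
by rewrite integral_cst // mul1e probability_le1.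
Qed.

Definition gridpt (R : realType) (tau : R) (j : nat) : R := -1 + tau + 2 * tau * j%:R.
Definition ridx (R : realType) (N : nat) (tau x : R) : 'I_N.+1 :=
  inord (Num.truncn ((x + 1) / (2 * tau))).

Lemma round_ok (R : realType) (tau x : R) : 0 < tau -> -1 <= x <= 1 ->
  `|gridpt tau (ridx (Num.truncn tau^-1) tau x) - x| <= tau.
Proof.
move=> tau0 /andP[x1 x2].
set y := (x + 1) / (2 * tau).
have y0 : 0 <= y by apply: divr_ge0; lra.
have ey : y * (2 * tau) = x + 1 by rewrite /y mulfVK //; lra.
have /andP[jy yj] := truncn_itv y0.
set j := Num.truncn y in jy yj *.
have jN : (j <= Num.truncn tau^-1)%N.
  rewrite truncn_ge_nat; last by rewrite invr_ge0 ltW.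
  apply: (le_trans jy).
  rewrite /y ler_pdivrMr; last lra.
  rewrite mulrCA mulVf; last lra.
  lra.
rewrite /gridpt /ridx -/y -/j inordK; last by rewrite ltnS.
have h1 : 2 * tau * j%:R <= x + 1.
  by rewrite -ey mulrC ler_wpM2r //; lra.
have h2 : x + 1 < (j.+1)%:R * (2 * tau).
  by rewrite -ey ltr_pM2r //; lra.
rewrite -natr1 in h2.
rewrite ler_norml; apply/andP; split; lra.
Qed.

Lemma transcript_map (R : realType) n (Th : Type) (A : det_sq_alg R n Th)
  (h : sq_query R n -> R) (O : sq_oracle R n) :
  (forall hs r, O hs r = h r) -> forall k,
  size (sq_transcript A O k).1 = k /\
  (sq_transcript A O k).2 = map h (sq_transcript A O k).1.
Proof.
move=> hO; elim=> [|k [IH1 IH2]] //=.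
move: IH1 IH2; case: (sq_transcript A O k) => qs ans /= H1 H2.
by rewrite size_rcons map_rcons H1 H2 hO.
Qed.

Lemma core (R : realType) (n : nat)
    (DD : set (probability (n.-tuple R) R))
    (Theta : Type) (rho : Theta -> Theta -> R) (hrho : is_metric rho)
    (theta : probability (n.-tuple R) R -> Theta)
    (tau eps alpha : R) (htau : 0 < tau) (heps : 0 < eps)
    (q : nat) (dO : measure_display) (Omega : measurableType dO)
    (P : probability Omega R) (A : Omega -> det_sq_alg R n Theta) :
  rand_sq_estimates rho DD theta tau eps alpha q P A ->
  forall K (f : 'I_K -> Theta), is_packing rho (theta @` DD) eps f ->
  (1 - alpha) * K%:R <= ((Num.truncn tau^-1).+1)%:R ^+ q.
Proof.
move=> Hest K f [hf1 hf2].
have [Ds hDs] := @choice _ _ (fun i D => DD D /\ theta D = f i)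
  (fun i => let: ex_intro2 D DD1 eD := hf1 i in ex_intro _ D (conj DD1 eD)).
set N := Num.truncn tau^-1.
pose E i r := fine (sq_expect (Ds i) r).
have Efin i r : (E i r)%:E = sq_expect (Ds i) r /\ -1 <= E i r <= 1.
  rewrite /E; have := expect_bnd (Ds i) r.
  by case: (sq_expect _ r) => [x| |] //=; rewrite lee_fin ler_norml.
pose O i : sq_oracle R n := fun _ r => gridpt tau (ridx N tau (E i r)).
have vO i : valid_STAT tau (Ds i) (O i).
  move=> hs r; rewrite -(Efin i r).1 -EFinB /= lee_fin.
  rewrite /O; apply: round_ok => //; exact: (Efin i r).2.
have hex : forall i, exists S : set Omega, [/\ measurable S,
      S `<=` [set w | rho (f i) (sq_run (A w) (O i) q) <= eps] &
      ((1 - alpha)%:E <= P S)%E].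
  move=> i.
  have [S [mS sS pS]] := Hest (Ds i) (hDs i).1 (O i) (vO i).
  by exists S; split => //; rewrite -(hDs i).2.
have [S hS] := choice hex.
have card_bnd w : (#|[set i | w \in S i]| <= N.+1 ^ q)%N.
  set a := A w.
  pose r0 := alg_query a [::].
  pose qs i := (sq_transcript a (O i) q).1.
  pose code i : {ffun 'I_q -> 'I_N.+1} :=
    [ffun t : 'I_q => ridx N tau (E i (nth r0 (qs i) t))].
  have trm i := transcript_map a
    (h := fun r => gridpt tau (ridx N tau (E i r))) (O := O i) (fun _ _ => erefl) q.
  suff inj : {in [set i | w \in S i] &, injective code}.
    by apply: (leq_trans (@leq_card_in _ _ code _ inj)); rewrite card_ffun !card_ord.
  move=> i j; rewrite !inE => /set_mem wi /set_mem wj eqc.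
  have ans_eq : (sq_transcript a (O i) q).2 = (sq_transcript a (O j) q).2.
    have [si ei] := trm i; have [sj ej] := trm j.
    apply: (@eq_from_nth _ 0); first by rewrite ei ej !size_map si sj.
    move=> t; rewrite ei size_map si => tq.
    rewrite ej !(nth_map r0) ?si ?sj //.
    have := congr1 (fun g : {ffun 'I_q -> 'I_N.+1} => g (Ordinal tq)) eqc.
    rewrite !ffunE /= => ->.
    done.
  have oi := wi; have oj := wj.
  move: (hS i) (hS j) => [_ si _] [_ sj _].
  move: (si _ wi) (sj _ wj); rewrite /= /sq_run -/a ans_eq => hi hj.
  apply/eqP; apply: contraT => nij.
  have := hf2 _ _ nij.
  case: hrho => _ _ hsym htri.
  set o := alg_output a (sq_transcript a (O j) q).2 in hi hj *.
  have := htri (f i) o (f j).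
  rewrite (hsym o (f j)).
  move=> h1 h2; have : false = true by apply/idP; lra.
  by [].
have mI i : measurable_fun [set: Omega] (fun x => (\1_(S i) x)%:E).
  by apply/measurable_EFinP; apply: measurable_indic; case: (hS i).
rewrite -lee_fin.
apply: (@le_trans _ _ (\sum_(i < K) P (S i))%E).
  have -> : (((1 - alpha) * K%:R)%:E = (\sum_(i < K) (1 - alpha)%:E))%E.
    by rewrite sumEFin sumr_const card_ord mulr_natr.
  by apply: lee_sum => i _; case: (hS i).
have -> : (\sum_(i < K) P (S i) =
   \int[P]_(x in [set: Omega]) (\sum_(i < K) (\1_(S i) x)%:E))%E.
  rewrite ge0_integral_sum //.
  apply: eq_bigr => i _; rewrite integral_indic ?setIT //; by case: (hS i).
apply: (@le_trans _ _ (\int[P]_(x in [set: Omega]) (cst ((N.+1)%:R ^+ q)%:E x))%E).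
  apply: ge0_le_integral => //.
  - by move=> x _; apply: sume_ge0 => i _; rewrite lee_fin.
  - exact: emeasurable_sum.
  - move=> x _ /=; rewrite sumEFin lee_fin.
    rewrite (eq_bigr (fun i => (x \in S i)%:R)); last by move=> i _; rewrite indicE.
    rewrite -natr_sum -natrX ler_nat.
    rewrite (eq_bigr (fun i => if x \in S i then 1 else 0)%N); last first.
      by move=> i _; case: (x \in S i).
    rewrite -big_mkcond sum1_card.
    apply: leq_trans (card_bnd x); apply/eq_leq/eq_card => i /=. rewrite [RHS]inE unfold_in.
    by apply/idP/idP => /asboolP h; apply/asboolP => /=; [exact: mem_set | exact: set_mem].
rewrite integral_cst // -[X in (_ <= X)%E]mule1.
apply: lee_wpmul2l; first by rewrite lee_fin exprn_ge0.
exact: probability_le1.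
Qed.

Theorem theoremH3 (R : realType) (n : nat)
    (DD : set (probability (n.-tuple R) R))
    (Theta : Type) (rho : Theta -> Theta -> R) (hrho : is_metric rho)
    (theta : probability (n.-tuple R) R -> Theta)
    (tau eps alpha : R) (htau : 0 < tau) (heps : 0 < eps)
    (halpha : 0 <= alpha < 1)
    (q : nat) (dO : measure_display) (Omega : measurableType dO)
    (P : probability Omega R) (A : Omega -> det_sq_alg R n Theta) :
  rand_sq_estimates rho DD theta tau eps alpha q P A ->
  forall k : nat, ((k%:R)%:E <= pk rho (theta @` DD) eps)%E ->
    ln ((1 - alpha) * k%:R) <= q%:R * ln (1 + (Num.floor (tau^-1))%:~R).
Proof.
move=> Hest k Hk.
move: halpha => /andP[a0 a1].
set N := Num.truncn tau^-1.
have fz : 0 <= Num.floor tau^-1 by rewrite floor_ge0 invr_ge0 ltW.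
have eN : (Num.floor tau^-1)%:~R = N%:R :> R.
  by rewrite /N truncn_floor invr_ge0 ltW // natr_absz ger0_norm.
have bound : (1 - alpha) * k%:R <= (N.+1)%:R ^+ q.
  case: k Hk => [|k] Hk; first by rewrite mulr0 exprn_ge0.
  have : ((k.+1%:R - 2^-1)%:E < pk rho (theta @` DD) eps)%E.
    by apply: lt_le_trans Hk; rewrite lte_fin; lra.
  move/ereal_sup_gt => [y [k' [f hf] <-]]; rewrite lte_fin => hk'.
  have kk : (k.+1 <= k')%N.
    rewrite leqNgt; apply/negP => lt.
    move: lt; rewrite -(ler_nat R) -natr1 => lt; lra.
  apply: le_trans (core hrho htau heps Hest hf).
  by apply: ler_wpM2l; [lra | rewrite ler_nat].
rewrite eN (addrC 1 (N%:R)) natr1.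
have m1 : 1 <= (N.+1)%:R :> R by rewrite ler1n.
case: (lerP ((1 - alpha) * k%:R) 1) => h.
  apply: (le_trans (ln_le0 h)); apply: mulr_ge0 => //; exact: ln_ge0.
rewrite mulr_natl -lnXn; last lra.
rewrite ler_ln ?posrE //; lra.
Qed.
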